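(* For each of the three pairs of families (Demazure atoms, monomial slide polynomials), (Demazure atoms, fundamental slide polynomials), (fundamental particles, monomial slide polynomials), neither family expands positively in the other; that is, in each pair, some element of the first family is not a nonnegative linear combination of elements of the second, and some element of the second is not a nonnegative linear combination of elements of the first.
   Context: Weak composition of length $n$: sequence of $n$ nonnegative integers; $\mathrm{flat}(a)$ deletes zero parts; $b\ge a$ means $b_1+\cdots+b_i\ge a_1+\cdots+a_i$ for all $i$. $\mathfrak{M}_a=\sum x^b$ over $b\ge a$ (length $n$) with $\mathrm{flat}(b)=\mathrm{flat}(a)$; $\mathfrak{F}_a=\sum x^b$ over $b\ge a$ with $\mathrm{flat}(b)$ refining $\mathrm{flat}(a)$. Fundamental particle: a local move replaces consecutive entries $(0,k)$ at positions $p,p+1$ by $(i,j)$, $i+j=k$, $i,j\ge0$; fixed slides of $a$ are obtained by sequences of such moves with $j>0$ required whenever $a_{p+1}\neq0$; $\mathfrak{L}_a=\sum x^b$ over the set of fixed slides $b$. Demazure atom: in $D(a)$ ($a_i$ left-justified boxes in row $i$, row 1 lowest), triples (rows $r<s$) are Type A: $\gamma=(r,c),\alpha=(r,c+1),\beta=(s,c+1)$ with $a_r\ge a_s$, or Type B: $\gamma=(s,c),\alpha=(s,c+1),\beta=(r,c)$ with $a_s>a_r$; inversion triple: $\beta>\gamma\ge\alpha$ or $\gamma\ge\alpha>\beta$; $\mathcal{A}_a=\sum_S\prod_i x_i^{\#\{\text{entries } i\}}$ over fillings $S$ of $D(a)$ with positive integers, rows weakly decreasing left to right, distinct column entries, all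 triples inversion triples, and first-column entry of each nonempty row $i$ equal to $i$. Each family (for fixed length $n$) is a basis of $\mathbb{Z}[x_1,\ldots,x_n]$. *)

(* Defs.v *)
From HB Require Import structures.
From mathcomp Require Import all_boot all_order all_algebra.
From mathcomp Require Import mpoly.
Set Implicit Arguments. Unset Strict Implicit. Unset Printing Implicit Defensive.
Import Order.TTheory GRing.Theory Num.Theory.

(* A weak composition of length n is a multinomial a : 'X_{1..n};
   position i (1-indexed in the paper) is the ordinal i-1 : 'I_n.
   Polynomials live in {mpoly int[n]} = Z[x_1,...,x_n], x_i = 'X_(i-1). *)

Definition dominates n (b a : 'X_{1..n}) : bool :=
  [forall i : 'I_n, (\sum_(j < n | j <= i) a j <= \sum_(j < n | j <= i) b j)%N].

Definition flat n (a : 'X_{1..n}) : seq nat :=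
  [seq x <- [seq a i | i <- enum 'I_n] | x != 0%N].

(* refinesb c d : the composition c refines d, i.e. d is obtained from c by
   summing consecutive nonempty blocks of c *)
Fixpoint refinesb (c d : seq nat) : bool :=
  match d with
  | [::] => c == [::]
  | x :: d' => has (fun k => (sumn (take k c) == x) && refinesb (drop k c) d')
                   (iota 1 (size c))
  end.

Definition mslide n (a : 'X_{1..n}) : {mpoly int[n]} :=
  \sum_(b : 'X_{1..n < (mdeg a).+1} | dominates b a && (flat b == flat a))
    'X_[bmnm b].

Definition fslide n (a : 'X_{1..n}) : {mpoly int[n]} :=
  \sum_(b : 'X_{1..n < (mdeg a).+1} | dominates b a && refinesb (flat b) (flat a))
    'X_[bmnm b].

(* one local move of the fundamental particle of a:  consecutive entries
   (0,k) at positions p, p+1 of b are replaced by (i,j) in c, i + j = k,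
   with j > 0 required whenever a_{p+1} <> 0.  Moves preserve the degree,
   so all fixed slides of a live in 'X_{1..n < (mdeg a).+1}. *)
Definition pmove n (a : 'X_{1..n}) (b c : 'X_{1..n < (mdeg a).+1}) : bool :=
  [exists p : 'I_n, exists q : 'I_n,
     [&& val q == p.+1, bmnm b p == 0%N, (bmnm c p + bmnm c q == bmnm b q)%N,
         [forall t : 'I_n, [|| t == p, t == q | bmnm c t == bmnm b t]] &
         (a q != 0%N) ==> (0 < bmnm c q)%N]].

Definition self_bm n (a : 'X_{1..n}) : 'X_{1..n < (mdeg a).+1} :=
  BMultinom (ltnSn (mdeg a)).

Definition particle n (a : 'X_{1..n}) : {mpoly int[n]} :=
  \sum_(b : 'X_{1..n < (mdeg a).+1} | connect (@pmove n a) (self_bm a) b)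
    'X_[bmnm b].

(* Cells of D(a): (r, c) with r : 'I_n (row r+1, row 1
   lowest) and column c < a r (columns 0-indexed, c < mdeg a).  A filling is
   encoded as S : {ffun 'I_n * 'I_(mdeg a) -> 'I_n.+1} whose value is 0
   outside D(a) (canonical encoding) and the (positive) entry inside.
   Entries of valid fillings are automatically <= n (rows weakly decrease
   from the first-column entry r+1 <= n), so this range loses nothing. *)
Definition atom_filling := fun n d => {ffun 'I_n * 'I_d -> 'I_n.+1}.

Definition inv_triple (g al be : nat) : bool :=
  ((g < be) && (al <= g)) || ((al <= g) && (be < al)).

Definition valid_filling n (a : 'X_{1..n}) (S : atom_filling n (mdeg a)) : bool :=
  let v r c := (S (r, c) : nat) in
  [&&
      [forall r : 'I_n, forall c : 'I_(mdeg a), (c < a r)%N || (v r c == 0%N)],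
      [forall r : 'I_n, forall c : 'I_(mdeg a), (c < a r)%N ==> (0 < v r c)%N],
      [forall r : 'I_n, forall c : 'I_(mdeg a), ((val c == 0%N) && (c < a r)%N) ==> (v r c == r.+1)],
      [forall r : 'I_n, forall c : 'I_(mdeg a), forall c' : 'I_(mdeg a),
         ((val c' == c.+1) && (c' < a r)%N) ==> (v r c' <= v r c)%N],
      [forall r : 'I_n, forall s : 'I_n, forall c : 'I_(mdeg a),
         [&& r != s, (c < a r)%N & (c < a s)%N] ==> (v r c != v s c)],
      (* type A triples are inversion triples *)
      [forall r : 'I_n, forall s : 'I_n, forall c : 'I_(mdeg a), forall c' : 'I_(mdeg a),
         [&& (r < s)%N, (a s <= a r)%N, val c' == c.+1, (c' < a r)%N & (c' < a s)%N]
           ==> inv_triple (v r c) (v r c') (v s c')] &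
      (* type B triples are inversion triples *)
      [forall r : 'I_n, forall s : 'I_n, forall c : 'I_(mdeg a), forall c' : 'I_(mdeg a),
         [&& (r < s)%N, (a r < a s)%N, val c' == c.+1, (c' < a s)%N & (c < a r)%N]
           ==> inv_triple (v s c) (v s c') (v r c)]].

Definition filling_weight n (a : 'X_{1..n}) (S : atom_filling n (mdeg a))
  : 'X_{1..n} :=
  [multinom #|[pred rc : 'I_n * 'I_(mdeg a) |
                (rc.2 < a rc.1)%N && ((S rc : nat) == i.+1)]| | i < n].

Definition atom n (a : 'X_{1..n}) : {mpoly int[n]} :=
  \sum_(S : atom_filling n (mdeg a) | valid_filling S) 'X_[filling_weight S].

Definition pos_comb n (B : 'X_{1..n} -> {mpoly int[n]}) (f : {mpoly int[n]}) :=
  exists (s : seq 'X_{1..n}) (c : 'X_{1..n} -> nat),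
    f = (\sum_(b <- s) (c b)%:R * B b)%R.

Definition not_pos_in (A B : forall n, 'X_{1..n} -> {mpoly int[n]}) :=
  exists n (a : 'X_{1..n}), ~ pos_comb (B n) (A n a).

(* Main.v *)
Require Import Defs.
From HB Require Import structures.
From mathcomp Require Import all_boot all_order all_algebra.
From mathcomp Require Import mpoly.
From mathcomp Require Import zify.
Set Implicit Arguments. Unset Strict Implicit. Unset Printing Implicit Defensive.
Import Order.TTheory GRing.Theory Num.Theory.



Lemma mcoeff_sumX (n : nat) (T : finType) (P : pred T) (g : T -> 'X_{1..n}) m :
  mcoeff m (\sum_(i | P i) 'X_[g i] : {mpoly int[n]}) =
  (#|[pred i | P i && (g i == m)]|%:R)%R.
Proof.
rewrite raddf_sum /= (eq_bigr (fun i => (((g i == m) : nat)%:R)%R)); last first.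
  by move=> i _; rewrite mcoeffX.
rewrite -natr_sum; congr (GRing.natmul 1 _).
rewrite -sum1_card big_mkcondr /=; apply: eq_bigr => i _; by case: (g i == m).
Qed.

Lemma mcoeff_sumX_neq0 (n : nat) (T : finType) (P : pred T) (g : T -> 'X_{1..n}) m :
  (mcoeff m (\sum_(i | P i) 'X_[g i] : {mpoly int[n]}) != 0)%R <->
  exists i, P i && (g i == m).
Proof.
rewrite mcoeff_sumX pnatr_eq0 -lt0n; split.
  by case/card_gt0P => i; rewrite inE => H; exists i.
by case=> i Hi; apply/card_gt0P; exists i; rewrite inE.
Qed.

Lemma mcoeff_sumX_ge0 (n : nat) (T : finType) (P : pred T) (g : T -> 'X_{1..n}) m :
  (0 <= mcoeff m (\sum_(i | P i) 'X_[g i] : {mpoly int[n]}))%R.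
Proof. by rewrite mcoeff_sumX ler0n. Qed.

Lemma not_pos_crit (n : nat) (B : 'X_{1..n} -> {mpoly int[n]}) f m m' :
  (forall b k, 0 <= mcoeff k (B b))%R ->
  (forall b, mcoeff m (B b) != 0 -> mcoeff m' (B b) != 0)%R ->
  (mcoeff m f != 0)%R -> mcoeff m' f = 0%R -> ~ pos_comb B f.
Proof.
move=> Bge0 Bmm' fm fm' [s [c Ef]]; move: fm fm'; rewrite {}Ef !raddf_sum /=.
elim: s => [|b s IH]; first by rewrite !big_nil eqxx.
rewrite !big_cons !mulr_natl !mcoeffMn => Hm Hm'.
have ge0 k : (0 <= \sum_(j <- s) mcoeff k ((c j)%:R * B j))%R.
  by apply: sumr_ge0 => j _; rewrite mulr_natl mcoeffMn mulrn_wge0.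
move/eqP: Hm'; rewrite paddr_eq0 ?mulrn_wge0 ?ge0 //; case/andP => /eqP t0 /eqP r0.
apply: (IH _ r0).
move: Hm; apply: contraNneq => r0'; rewrite r0' addr0.
move: t0 => /eqP; rewrite mulrn_eq0; case/orP => [/eqP ->|H]; first by rewrite mulr0n.
have: (mcoeff m (B b) == 0)%R by apply: contraTT H => /Bmm'.
by move/eqP ->; rewrite mul0rn.
Qed.

Lemma connect_inv (T : finType) (e : rel T) (P : pred T) x y :
  (forall u v, e u v -> P u -> P v) -> connect e x y -> P x -> P y.
Proof.
move=> He /connectP [p]; elim: p x => [|z p IH] x /=; first by move=> _ ->.
by case/andP => exz pz ey Px; apply: (IH z pz ey); apply: He Px.
Qed.

Lemma mcoeff_bsum (n : nat) d (P : pred 'X_{1..n}) m :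
  (mcoeff m (\sum_(i : 'X_{1..n < d} | P (bmnm i)) 'X_[bmnm i] : {mpoly int[n]}) != 0)%R <->
  (mdeg m < d) && P m.
Proof.
rewrite mcoeff_sumX_neq0; split.
  by case=> i /andP [Pi /eqP <-]; rewrite Pi bmdeg.
by case/andP => H Pm; exists (BMultinom H); rewrite /= Pm eqxx.
Qed.



Definition i0 : 'I_2 := ord0.
Definition i1 : 'I_2 := ord_max.
Definition mk2 (x y : nat) : 'X_{1..2} := [multinom [tuple x; y]].

Lemma mk2_0 x y : mk2 x y i0 = x. Proof. by []. Qed.
Lemma mk2_1 x y : mk2 x y i1 = y. Proof. by []. Qed.

Lemma ord2P (i : 'I_2) : i = i0 \/ i = i1.
Proof. by case: i => [[|[|//]] H]; [left|right]; apply: val_inj. Qed.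

Lemma big2 (F : 'I_2 -> nat) : (\sum_(i < 2) F i = F i0 + F i1)%N.
Proof.
rewrite big_ord_recl big_ord_recl big_ord0 addn0; congr (_ + F _)%N; exact: val_inj.
Qed.

Lemma mdeg2 (m : 'X_{1..2}) : mdeg m = (m i0 + m i1)%N.
Proof. by rewrite mdegE big2. Qed.

Lemma mdeg_mk2 x y : mdeg (mk2 x y) = (x + y)%N.
Proof. by rewrite mdeg2. Qed.

Lemma mnm2 (m : 'X_{1..2}) : m = mk2 (m i0) (m i1).
Proof. by apply/mnmP => i; case: (ord2P i) => ->. Qed.

Lemma sum2c (F : 'I_2 -> nat) (i : 'I_2) :
  (\sum_(j < 2 | j <= i) F j = if val i == 0%N then F i0 else F i0 + F i1)%N.
Proof. by rewrite big_mkcond big2; case: (ord2P i) => -> /=; rewrite ?addn0. Qed.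

Lemma dominates2 (b a : 'X_{1..2}) :
  dominates b a = (a i0 <= b i0) && (a i0 + a i1 <= b i0 + b i1).
Proof.
rewrite /dominates; apply/forallP/andP.
  by move=> H; split; [move: (H i0)|move: (H i1)]; rewrite !sum2c.
by case=> H1 H2 i; rewrite !sum2c; case: ifP.
Qed.

Lemma enum2 : enum 'I_2 = [:: i0; i1].
Proof. by apply: (inj_map val_inj); rewrite val_enum_ord. Qed.

Lemma flat2 (a : 'X_{1..2}) : flat a = [seq x <- [:: a i0; a i1] | x != 0%N].
Proof. by rewrite /flat enum2. Qed.

Lemma mslide_coef n (a m : 'X_{1..n}) :
  (mcoeff m (mslide a) != 0)%R <->
  [&& mdeg m < (mdeg a).+1, dominates m a & flat m == flat a].
Proof.
exact: (@mcoeff_bsum n _ (fun b => dominates b a && (flat b == flat a)) m).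
Qed.

Lemma fslide_coef n (a m : 'X_{1..n}) :
  (mcoeff m (fslide a) != 0)%R <->
  [&& mdeg m < (mdeg a).+1, dominates m a & refinesb (flat m) (flat a)].
Proof.
exact: (@mcoeff_bsum n _ (fun b => dominates b a && refinesb (flat b) (flat a)) m).
Qed.

Lemma particle_coef n (a m : 'X_{1..n}) :
  (mcoeff m (particle a) != 0)%R <->
  exists c, connect (@pmove n a) (self_bm a) c && (bmnm c == m).
Proof. by rewrite /particle mcoeff_sumX_neq0. Qed.

Lemma atom_coef n (a m : 'X_{1..n}) :
  (mcoeff m (atom a) != 0)%R <->
  exists S : atom_filling n (mdeg a), valid_filling S && (filling_weight S == m).
Proof. by rewrite /atom mcoeff_sumX_neq0. Qed.

Lemma mslide_ge0 n (a m : 'X_{1..n}) : (0 <= mcoeff m (mslide a))%R.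
Proof. exact: mcoeff_sumX_ge0. Qed.
Lemma fslide_ge0 n (a m : 'X_{1..n}) : (0 <= mcoeff m (fslide a))%R.
Proof. exact: mcoeff_sumX_ge0. Qed.
Lemma particle_ge0 n (a m : 'X_{1..n}) : (0 <= mcoeff m (particle a))%R.
Proof. exact: mcoeff_sumX_ge0. Qed.
Lemma atom_ge0 n (a m : 'X_{1..n}) : (0 <= mcoeff m (atom a))%R.
Proof. exact: mcoeff_sumX_ge0. Qed.


Lemma mnm_le_mdeg n (a : 'X_{1..n}) i : a i <= mdeg a.
Proof. by rewrite mdegE (bigD1 i) //= leq_addr. Qed.

Lemma weightE n (a : 'X_{1..n}) (S : atom_filling n (mdeg a)) i :
  filling_weight S i = #|[pred rc : 'I_n * 'I_(mdeg a) |
                (rc.2 < a rc.1)%N && ((S rc : nat) == i.+1)]|.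
Proof. by rewrite /filling_weight mnmE. Qed.

Lemma atom_fc n (a : 'X_{1..n}) (S : atom_filling n (mdeg a)) r :
  valid_filling S -> 0 < a r -> 0 < filling_weight S r.
Proof.
move=> /andP [_ /andP [_ /andP [H3 /andP [_ /andP [_ /andP [_ _]]]]]] ar; rewrite weightE.
have d0 : 0 < mdeg a by apply: leq_trans ar (mnm_le_mdeg _ _).
apply/card_gt0P; exists (r, Ordinal d0); rewrite inE /= ar /=.
by move/forallP: H3 => /(_ r) /forallP /(_ (Ordinal d0)); rewrite /= ar.
Qed.

Lemma atom_r0 (a : 'X_{1..2}) (S : atom_filling 2 (mdeg a)) :
  valid_filling S -> 1 < a i0 -> 1 < filling_weight S i0.
Proof.
move=> /andP [_ /andP [H2 /andP [H3 /andP [H4 /andP [_ /andP [_ _]]]]]] ar; rewrite weightE.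
have d1 : 1 < mdeg a by apply: leq_trans ar (mnm_le_mdeg _ _).
have d0 : 0 < mdeg a by apply: ltnW.
set c0 := Ordinal d0; set c1 := Ordinal d1.
have v0 : (S (i0, c0) : nat) = 1.
  move/forallP: H3 => /(_ i0) /forallP /(_ c0); rewrite /= (ltnW ar) /=.
  by move/eqP.
have v1 : (S (i0, c1) : nat) = 1.
  move/forallP: H4 => /(_ i0) /forallP /(_ c0) /forallP /(_ c1); rewrite /= ar /= v0.
  move/forallP: H2 => /(_ i0) /forallP /(_ c1); rewrite /= ar /=.
  by case: (S (i0, c1)) => [[|[|k]] ?].
have sub : [set (i0, c0); (i0, c1)] \subset
   [pred rc : 'I_2 * 'I_(mdeg a) | (rc.2 < a rc.1)%N && ((S rc : nat) == i0.+1)].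
  apply/subsetP => x; rewrite !inE; case/orP => /eqP -> /=.
    by rewrite v0 (ltnW ar).
  by rewrite v1 ar.
apply: leq_trans (subset_leq_card sub); rewrite cards2.
by rewrite xpair_eqE eqxx /=.
Qed.

Lemma sum_eq1 (x : nat) k : (\sum_(i < k) ((x == i.+1) : nat) = ((0 < x) && (x <= k)))%N.
Proof.
elim: k => [|k IH]; first by rewrite big_ord0; case: x => [|[]].
rewrite big_ord_recr /= IH.
case E: (x == k.+1).
  by move/eqP: E => ->; rewrite ltnn andbF leqnn.
by rewrite [x <= k.+1]leq_eqVlt E ltnS addn0.
Qed.

Lemma sum_lt k d : (\sum_(c < d) ((c < k) : nat) = minn d k)%N.
Proof.
elim: d => [|d IH]; first by rewrite big_ord0 min0n.
rewrite big_ord_recr /= IH; case: (ltnP d k) => H; lia.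
Qed.

Lemma atom_hom n (a : 'X_{1..n}) (S : atom_filling n (mdeg a)) :
  valid_filling S -> mdeg (filling_weight S) = mdeg a.
Proof.
move=> /andP [_ /andP [H2 /andP [_ /andP [_ /andP [_ /andP [_ _]]]]]].
rewrite mdegE (eq_bigr (fun i : 'I_n => \sum_(rc : 'I_n * 'I_(mdeg a))
   (((rc.2 < a rc.1) && ((S rc : nat) == i.+1)) : nat)))%N; last first.
  by move=> i _; rewrite weightE -sum1_card big_mkcond /=; apply: eq_bigr => rc _; rewrite inE; case: ifP.
rewrite exchange_big /=.
rewrite (eq_bigr (fun rc : 'I_n * 'I_(mdeg a) => ((rc.2 < a rc.1) : nat))); last first.
  move=> [r c] _ /=; case Hc: (c < a r) => /=; last by rewrite big1.
    rewrite sum_eq1; move/forallP: H2 => /(_ r) /forallP /(_ c); rewrite Hc /= => ->.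
    by rewrite -ltnS ltn_ord.
rewrite -(pair_bigA _ (fun r (c : 'I_(mdeg a)) => ((c < a r) : nat))) /=.
rewrite [in RHS]mdegE; apply: eq_bigr => r _; rewrite sum_lt.
by apply/minn_idPr; apply: mnm_le_mdeg.
Qed.


Lemma min2_lt3 k : minn k 2 < 3.
Proof. by apply: leq_ltn_trans (geq_minr _ _) _. Qed.

Definition mkS (a : 'X_{1..2}) (G : nat -> nat -> nat) : atom_filling 2 (mdeg a) :=
  [ffun rc : 'I_2 * 'I_(mdeg a) => if (rc.2 < a rc.1) then @Ordinal 3 _ (min2_lt3 (G rc.1 rc.2)) else ord0].

Lemma mkSE a G r c : (mkS a G (r, c) : nat) = if c < a r then minn (G r c) 2 else 0.
Proof. by rewrite /mkS ffunE /=; case: ifP. Qed.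

Lemma weight_mkS a G i : filling_weight (mkS a G) i =
  (\sum_(r < 2) \sum_(0 <= c < mdeg a) ((c < a r) && ((if c < a r then minn (G r c) 2 else 0) == i.+1)))%N.
Proof.
transitivity (\sum_(r < 2) \sum_(c < mdeg a) ((c < a r) && ((if c < a r then minn (G r c) 2 else 0) == i.+1)) : nat)%N; last first.
  by apply: eq_bigr => r _; rewrite big_mkord.
rewrite pair_bigA /= weightE -sum1_card big_mkcond /=; apply: eq_bigr => -[r c] _.
by rewrite inE /= mkSE; case: ifP.
Qed.

Ltac dord := let j := fresh "j" in let Hj := fresh "Hj" in
  let Hb := fresh "Hb" in
  case; intros j Hj; have Hb := Hj; rewrite ?mdeg_mk2 in Hb;
  do 5 (try (destruct j as [|j]; last first)); try (exfalso; lia).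

Ltac solve_valid :=
  rewrite /valid_filling;
  repeat (apply/andP; split);
  repeat (apply/forallP; dord);
  rewrite ?mkSE /mk2 /=; by [].

Ltac solve_weight :=
  apply/mnmP; let i := fresh "i" in intro i; case: (ord2P i) => ->;
  rewrite weight_mkS big2 mdeg_mk2 /mk2 unlock /=; by [].


Lemma pmove2 (a : 'X_{1..2}) x y : @pmove 2 a x y ->
  [/\ bmnm x i0 = 0, bmnm y i0 + bmnm y i1 = bmnm x i1 &
      (a i1 != 0) ==> (0 < bmnm y i1)].
Proof.
case/existsP => p /existsP [q /and5P [/eqP Hq /eqP Hp /eqP Hs _ Ha]].
have ep : p = i0.
  case: (ord2P p) => // ep; move: (ltn_ord q); rewrite Hq ep //.
have eq : q = i1 by apply: val_inj; rewrite Hq ep.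
by subst p q.
Qed.

Lemma flat02 : flat (mk2 0 2) = [:: 2]. Proof. by rewrite flat2. Qed.
Lemma flat20 : flat (mk2 2 0) = [:: 2]. Proof. by rewrite flat2. Qed.

Lemma dom02_20 (b : 'X_{1..2}) : dominates (mk2 0 2) b -> dominates (mk2 2 0) b.
Proof. rewrite !dominates2 !mk2_0 !mk2_1 => /andP [H1 H2]; apply/andP; lia. Qed.

Lemma mslide_side (b : 'X_{1..2}) :
  (mcoeff (mk2 0 2) (mslide b) != 0)%R -> (mcoeff (mk2 2 0) (mslide b) != 0)%R.
Proof.
rewrite !mslide_coef !mdeg_mk2 flat02 flat20 => /and3P [H1 /dom02_20 H2 H3].
by rewrite H1 H2 H3.
Qed.

Lemma fslide_side (b : 'X_{1..2}) :
  (mcoeff (mk2 0 2) (fslide b) != 0)%R -> (mcoeff (mk2 2 0) (fslide b) != 0)%R.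
Proof.
rewrite !fslide_coef !mdeg_mk2 flat02 flat20 => /and3P [H1 /dom02_20 H2 H3].
by rewrite H1 H2 H3.
Qed.

Lemma atom02_m : (mcoeff (mk2 0 2) (atom (mk2 0 2)) != 0)%R.
Proof.
apply/atom_coef; exists (mkS (mk2 0 2) (fun _ _ => 2)); apply/andP; split.
  solve_valid.
apply/eqP; solve_weight.
Qed.

Lemma atom02_m' : mcoeff (mk2 2 0) (atom (mk2 0 2)) = 0%R.
Proof.
apply/eqP; apply: contraT => /atom_coef [S /andP [vS /eqP wS]].
by have := atom_fc (r := i1) vS; rewrite wS mk2_1 mk2_1 => /(_ isT).
Qed.

Lemma particle02_m : (mcoeff (mk2 0 2) (particle (mk2 0 2)) != 0)%R.
Proof. by apply/particle_coef; exists (self_bm (mk2 0 2)); rewrite connect0 eqxx. Qed.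

Lemma particle02_m' : mcoeff (mk2 2 0) (particle (mk2 0 2)) = 0%R.
Proof.
apply/eqP; apply: contraT => /particle_coef [c /andP [Hc /eqP Ec]].
have := connect_inv (P := fun c : 'X_{1..2 < (mdeg (mk2 0 2)).+1} => 0 < bmnm c i1) _ Hc.
rewrite Ec mk2_1; apply => //.
by move=> u v /pmove2 [_ _]; rewrite mk2_1.
Qed.

Lemma mslide02_m : (mcoeff (mk2 0 2) (mslide (mk2 0 2)) != 0)%R.
Proof. by apply/mslide_coef; rewrite ltnSn eqxx dominates2 !mk2_0 !mk2_1. Qed.

Lemma mslide02_m' : mcoeff (mk2 1 1) (mslide (mk2 0 2)) = 0%R.
Proof.
apply/eqP; apply: contraT => /mslide_coef /and3P [_ _].
by rewrite !flat2.
Qed.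


Lemma particle_side (b : 'X_{1..2}) :
  (mcoeff (mk2 0 2) (particle b) != 0)%R -> (mcoeff (mk2 1 1) (particle b) != 0)%R.
Proof.
case/particle_coef => c /andP [Hc /eqP Ec].
pose P := fun c : 'X_{1..2 < (mdeg b).+1} =>
   (b i0 <= bmnm c i0) && (bmnm c i0 + bmnm c i1 == b i0 + b i1).
have Hinv : forall u v, @pmove 2 b u v -> P u -> P v.
  move=> u v /pmove2 [x0 e _] /andP [h1 /eqP h2]; apply/andP; split; apply/eqP || idtac; lia.
have := connect_inv Hinv Hc; rewrite /P Ec mk2_0 mk2_1 /= leqnn eqxx => /(_ isT) /andP [H1 /eqP H2].
have b0 : b i0 = 0 by lia.
have b1 : b i1 = 2 by lia.
have Hd : mdeg (mk2 1 1) < (mdeg b).+1 by rewrite mdeg_mk2 mdeg2 b0 b1.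
apply/particle_coef; exists (BMultinom Hd); rewrite eqxx andbT.
apply: connect1; apply/existsP; exists i0; apply/existsP; exists i1.
rewrite /= b0 b1 !mk2_0 !mk2_1 /= andbT; apply/forallP => t.
by case: (ord2P t) => ->.
Qed.

Lemma atom_side2 (b : 'X_{1..2}) :
  (mcoeff (mk2 0 2) (atom b) != 0)%R -> (mcoeff (mk2 1 1) (atom b) != 0)%R.
Proof.
case/atom_coef => S /andP [vS /eqP wS].
have b0 : b i0 = 0.
  apply/eqP; apply: contraT; rewrite -lt0n => /(atom_fc vS); by rewrite wS mk2_0.
have hd := atom_hom vS; rewrite wS mdeg_mk2 mdeg2 b0 /= in hd.
have b1 : b i1 = 2 by lia.
have -> : b = mk2 0 2 by rewrite (mnm2 b) b0 b1.
clear S vS wS hd b0 b1.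
apply/atom_coef; exists (mkS (mk2 0 2) (fun _ c => if c == 0 then 2 else 1)); apply/andP; split.
  solve_valid.
apply/eqP; solve_weight.
Qed.

Lemma atom_side4 (b : 'X_{1..2}) :
  (mcoeff (mk2 1 3) (atom b) != 0)%R -> (mcoeff (mk2 2 2) (atom b) != 0)%R.
Proof.
case/atom_coef => S /andP [vS /eqP wS].
have b0 : b i0 <= 1.
  rewrite leqNgt; apply/negP => /(atom_r0 vS); by rewrite wS mk2_0.
have hd := atom_hom vS; rewrite wS mdeg_mk2 mdeg2 /= in hd.
clear S vS wS.
have [->|->] : b = mk2 0 4 \/ b = mk2 1 3.
  rewrite (mnm2 b); case: (b i0) b0 hd => [|[|//]] _ hd; [left|right]; congr mk2; lia.
- apply/atom_coef; exists (mkS (mk2 0 4) (fun _ c => if c < 2 then 2 else 1)); apply/andP; split.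
    solve_valid.
  apply/eqP; solve_weight.
- apply/atom_coef; exists (mkS (mk2 1 3) (fun r c => if r == 0 then 1 else if c < 2 then 2 else 1)); apply/andP; split.
    solve_valid.
  apply/eqP; solve_weight.
Qed.

Lemma fslide13_m : (mcoeff (mk2 1 3) (fslide (mk2 1 3)) != 0)%R.
Proof. by apply/fslide_coef; rewrite ltnSn dominates2 !mk2_0 !mk2_1 flat2. Qed.

Lemma fslide13_m' : mcoeff (mk2 2 2) (fslide (mk2 1 3)) = 0%R.
Proof.
apply/eqP; apply: contraT => /fslide_coef /and3P [_ _].
by rewrite !flat2.
Qed.

Theorem proposition4p9 :
  [/\ not_pos_in atom mslide /\ not_pos_in mslide atom,
      not_pos_in atom fslide /\ not_pos_in fslide atom &
      not_pos_in particle mslide /\ not_pos_in mslide particle].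
Proof.
split; split.
- exists 2, (mk2 0 2); apply: (@not_pos_crit 2 _ _ (mk2 0 2) (mk2 2 0)).
  + exact: mslide_ge0.
  + exact: mslide_side.
  + exact: atom02_m.
  + exact: atom02_m'.
- exists 2, (mk2 0 2); apply: (@not_pos_crit 2 _ _ (mk2 0 2) (mk2 1 1)).
  + exact: atom_ge0.
  + exact: atom_side2.
  + exact: mslide02_m.
  + exact: mslide02_m'.
- exists 2, (mk2 0 2); apply: (@not_pos_crit 2 _ _ (mk2 0 2) (mk2 2 0)).
  + exact: fslide_ge0.
  + exact: fslide_side.
  + exact: atom02_m.
  + exact: atom02_m'.
- exists 2, (mk2 1 3); apply: (@not_pos_crit 2 _ _ (mk2 1 3) (mk2 2 2)).
  + exact: atom_ge0.
  + exact: atom_side4.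
  + exact: fslide13_m.
  + exact: fslide13_m'.
- exists 2, (mk2 0 2); apply: (@not_pos_crit 2 _ _ (mk2 0 2) (mk2 2 0)).
  + exact: mslide_ge0.
  + exact: mslide_side.
  + exact: particle02_m.
  + exact: particle02_m'.
- exists 2, (mk2 0 2); apply: (@not_pos_crit 2 _ _ (mk2 0 2) (mk2 1 1)).
  + exact: particle_ge0.
  + exact: particle_side.
  + exact: mslide02_m.
  + exact: mslide02_m'.
Qed.
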